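(* Let $X\in Ob(\mathscr C)$. Consider the functors \begin{equation*} \mathcal H_X:Vect_K\longrightarrow {^\mathscr C}Ctr,\quad U\mapsto \mathcal H_X^U, \qquad\qquad ev_X:{^\mathscr C}Ctr\longrightarrow Vect_K,\quad \mathcal M\mapsto \mathcal M(X). \end{equation*} Then $(\mathcal H_X,ev_X)$ is a pair of adjoint functors, i.e. there are natural isomorphisms ${^\mathscr C}Ctr(\mathcal H_X^U,\mathcal M)\cong Vect_K(U,\mathcal M(X))$ for $U\in Vect_K$, $\mathcal M\in {^\mathscr C}Ctr$.
   Context: $K$ is a field and $Vect_K$ the category of $K$-vector spaces; for vector spaces $U',U$ we write $(U',U):=Hom_K(U',U)$. A coalgebra $\mathscr C$ with several objects is a small category enriched over $Vect_K^{op}$: a set $Ob(\mathscr C)$, vector spaces $\mathscr C(X,Y)$, and linear maps $\delta_{XYZ}:\mathscr C(X,Z)\to \mathscr C(Y,Z)\otimes \mathscr C(X,Y)$, $\epsilon_X:\mathscr C(X,X)\to K$ satisfying coassociativity and counit conditions. A left $\mathscr C$-contramodule $\mathcal M$ consists of vector spaces $\mathcal M(X)$, $X\in Ob(\mathscr C)$, and maps $\pi_{XY}:(\mathscr C(X,Y),\mathcal M(Y))\to \mathcal M(X)$ such that $\pi_{XZ}\circ(\delta_{XYZ},\mathcal M(Z))=\pi_{XY}\circ(\mathscr C(X,Y),\pi_{YZ})$ as maps $(\mathscr C(X,Y),(\mathscr C(Y,Z),\mathcal M(Z)))\cong(\mathscr C(Y,Z)\otimes\mathscr C(X,Y),\mathcal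 M(Z))\to\mathcal M(X)$, and $\pi_{XX}\circ(\epsilon_X,\mathcal M(X))=id$ (using $\mathcal M(X)\cong(K,\mathcal M(X))$). Morphisms are families of linear maps $\phi(X)$ with $\phi(X)\circ\pi_{XY}=\pi_{XY}\circ(\mathscr C(X,Y),\phi(Y))$; the category is ${^\mathscr C}Ctr$. For $U\in Vect_K$ and $X\in Ob(\mathscr C)$, $\mathcal H_X^U$ is the contramodule with $\mathcal H_X^U(Y):=(\mathscr C(Y,X),U)$ and structure maps $(\mathscr C(Y,Z),(\mathscr C(Z,X),U))\cong(\mathscr C(Z,X)\otimes\mathscr C(Y,Z),U)\xrightarrow{(\delta_{YZX},U)}(\mathscr C(Y,X),U)$. *)

(* Defs.v *)
From HB Require Import structures.
From mathcomp Require Import all_boot all_algebra.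
From mathcomp Require Import boolp functions.
From Stdlib Require Import ClassicalEpsilon.

Set Implicit Arguments.
Unset Strict Implicit.
Unset Printing Implicit Defensive.
Import GRing.Theory.
Local Open Scope ring_scope.

Section HomSpace.
Variables (K : fieldType) (U V : lmodType K).

Definition linb : {pred U -> V} := fun f => `[< linear f >].

Lemma linb_closed : subsemimod_closed linb.
Proof.
split; first split.
- apply/asboolP => a x y /=; by rewrite !scaler0 add0r.
- move=> f g /asboolP Hf /asboolP Hg; apply/asboolP => a x y.
  change (f (a *: x + y) + g (a *: x + y) = a *: (f x + g x) + (f y + g y)).
  by rewrite Hf Hg scalerDr addrACA.
- move=> k f /asboolP Hf; apply/asboolP => a x y.
  change (k *: f (a *: x + y) = a *: (k *: f x) + k *: f y).
  by rewrite Hf scalerDr !scalerA mulrC.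
Qed.

HB.instance Definition _ := GRing.isSubSemiModClosed.Build K (U -> V) linb linb_closed.

Record VHom := MkHom { homf :> U -> V; homP : homf \in linb }.
HB.instance Definition _ := [isSub for homf].
HB.instance Definition _ := [Choice of VHom by <:].
HB.instance Definition _ := [SubChoice_isSubLmodule of VHom by <:].

End HomSpace.

Arguments MkHom {K U V} homf homP.

Section HomFacts.
Variables (K : fieldType).

Lemma homlin (U V : lmodType K) (f : VHom U V) : linear f.
Proof. exact: (asboolP _ (homP f)). Qed.

Lemma homD (U V : lmodType K) (f : VHom U V) x y : f (x + y) = f x + f y.
Proof. by have := homlin f 1 x y; rewrite scale1r => ->; rewrite scale1r. Qed.

Lemma hom0 (U V : lmodType K) (f : VHom U V) : f 0 = 0.
Proof. by apply: (addrI (f 0)); rewrite -homD !addr0. Qed.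

Lemma homZ (U V : lmodType K) (f : VHom U V) a x : f (a *: x) = a *: f x.
Proof. by have := homlin f a x 0; rewrite !addr0 hom0 addr0. Qed.

Definition mkhom (U V : lmodType K) (f : U -> V) (H : linear f) : VHom U V :=
  MkHom f (introT (asboolP _) H).

Lemma comp_lin (A B D : lmodType K) (g : VHom B D) (f : VHom A B) : linear (g \o f).
Proof. by move=> a x y /=; rewrite homD homZ homD homZ. Qed.
Definition hcomp (A B D : lmodType K) (g : VHom B D) (f : VHom A B) : VHom A D :=
  mkhom (comp_lin g f).

End HomFacts.

(* Concrete model of U (x) V : the finite sums  sum_i u_i (x) v_i, realised as
   bilinear forms on U^* x V^*  via  (u (x) v)(phi, psi) = phi u * psi v.      *)
Section Tensor.
Variables (K : fieldType) (A B : lmodType K).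

Definition Dual (U : lmodType K) := VHom U K^o.

Definition tensb : {pred Dual A -> Dual B -> K^o} := fun t =>
  `[< exists s : seq (A * B),
        t = fun (phi : Dual A) (psi : Dual B) => \sum_(p <- s) phi p.1 * psi p.2 >].

Lemma tensb_closed : subsemimod_closed tensb.
Proof.
split; first split.
- apply/asboolP; exists [::]; apply/funext => phi; apply/funext => psi.
  by rewrite big_nil.
- move=> t t' /asboolP [s ->] /asboolP [s' ->]; apply/asboolP; exists (s ++ s').
  by apply/funext => phi; apply/funext => psi; rewrite big_cat.
- move=> k t /asboolP [s ->]; apply/asboolP.
  exists (map (fun p => (k *: p.1, p.2)) s).
  apply/funext => phi; apply/funext => psi; rewrite big_map.
  change (k *: \sum_(p <- s) phi p.1 * psi p.2 =
          \sum_(p <- s) phi (k *: p.1) * psi p.2).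
  rewrite scaler_sumr; apply: eq_bigr => p _.
  by rewrite homZ; change (k * (phi p.1 * psi p.2) = k * phi p.1 * psi p.2); rewrite mulrA.
Qed.

HB.instance Definition _ :=
  GRing.isSubSemiModClosed.Build K (Dual A -> Dual B -> K^o) tensb tensb_closed.

Record Tensor := MkTensor { tensf :> Dual A -> Dual B -> K^o; tensP : tensf \in tensb }.
HB.instance Definition _ := [isSub for tensf].
HB.instance Definition _ := [Choice of Tensor by <:].
HB.instance Definition _ := [SubChoice_isSubLmodule of Tensor by <:].

Lemma tens_subproof (a : A) (b : B) :
  (fun (phi : Dual A) (psi : Dual B) => (phi a * psi b : K^o)) \in tensb.
Proof.
apply/asboolP; exists [:: (a, b)].
by apply/funext => phi; apply/funext => psi; rewrite big_seq1.
Qed.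
Definition tens (a : A) (b : B) : Tensor := MkTensor (tens_subproof a b).

End Tensor.

Section TensorFacts.
Variables (K : fieldType) (A B : lmodType K).

Lemma tensf_lin : linear (@tensf K A B).
Proof. move=> a u v. exact: (linearP (val : Tensor A B -> _)). Qed.

Lemma tev_lin (W : lmodType K) (D : VHom W (Tensor A B)) (phi : Dual A) (psi : Dual B) :
  linear (fun w => (D w : Dual A -> Dual B -> K^o) phi psi).
Proof.
move=> a x y /=; rewrite homlin tensf_lin.
by [].
Qed.
Definition tev (W : lmodType K) (D : VHom W (Tensor A B)) (phi : Dual A) (psi : Dual B)
  : Dual W := mkhom (tev_lin D phi psi).

End TensorFacts.

Section MoreHom.
Variables (K : fieldType).

Lemma homf_lin (U V : lmodType K) : linear (@homf K U V).
Proof. move=> a u v. exact: (linearP (val : VHom U V -> _)). Qed.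

(* the canonical isomorphism (A,(B,W)) ~= (B (x) A, W) :  F |-> the unique linear
   map h with h (b (x) a) = F a b *)
Definition tlift (A B W : lmodType K) (F : VHom A (VHom B W)) : VHom (Tensor B A) W :=
  epsilon (inhabits 0) (fun h : VHom (Tensor B A) W => forall a b, h (tens b a) = F a b).

Lemma scal_lin (A M : lmodType K) (e : Dual A) (m : M) : linear (fun c => e c *: m).
Proof. by move=> a x y /=; rewrite homD homZ scalerDl scalerA. Qed.
Definition scal_hom (A M : lmodType K) (e : Dual A) (m : M) : VHom A M :=
  mkhom (scal_lin e m).

Lemma post_lin (A U' U : lmodType K) (a : VHom U' U) : linear (fun g : VHom A U' => hcomp a g).
Proof.
move=> k g h; apply: val_inj; apply/funext => x /=.
change (a (homf (k *: g + h) x) = homf (k *: hcomp a g + hcomp a h) x).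
rewrite !homf_lin.
change (a (k *: g x + h x) = k *: a (g x) + a (h x)).
by rewrite homD homZ.
Qed.
Definition hpost (A U' U : lmodType K) (a : VHom U' U) : VHom (VHom A U') (VHom A U) :=
  mkhom (post_lin (A:=A) a).

End MoreHom.

Record coalgebra (K : fieldType) := Coalgebra {
  Ob : Type;
  Cm : Ob -> Ob -> lmodType K;
  delta : forall X Y Z : Ob, VHom (Cm X Z) (Tensor (Cm Y Z) (Cm X Y));
  eps : forall X : Ob, Dual (Cm X X) }.

Arguments Cm {K} c _ _.
Arguments delta {K} c X Y Z.
Arguments eps {K} c X.

(* Coassociativity and counit, evaluated against elementary tensors of
   linear forms (which separate the points of the tensor products).         *)
Definition is_coalgebra (K : fieldType) (C : coalgebra K) : Prop :=
  (forall (X Y Z W : Ob C) (c : Cm C X W)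
          (phi : Dual (Cm C Z W)) (psi : Dual (Cm C Y Z)) (chi : Dual (Cm C X Y)),
      (delta C X Y W c : _ -> _ -> _) (tev (delta C Y Z W) phi psi) chi
      = (delta C X Z W c : _ -> _ -> _) phi (tev (delta C X Y Z) psi chi)) /\
  (forall (X Y : Ob C) (c : Cm C X Y) (psi : Dual (Cm C X Y)),
      (delta C X Y Y c : _ -> _ -> _) (eps C Y) psi = psi c) /\
  (forall (X Y : Ob C) (c : Cm C X Y) (psi : Dual (Cm C X Y)),
      (delta C X X Y c : _ -> _ -> _) psi (eps C X) = psi c).

Record precontra (K : fieldType) (C : coalgebra K) := Precontra {
  cobj : Ob C -> lmodType K;
  cpi : forall X Y : Ob C, VHom (Cm C X Y) (cobj Y) -> cobj X }.

Arguments cobj {K C} p _.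
Arguments cpi {K C} p X Y.

Definition is_contramodule (K : fieldType) (C : coalgebra K) (M : precontra C) : Prop :=
  (forall X Y : Ob C, linear (cpi M X Y)) /\
  (forall (X Y Z : Ob C) (F : VHom (Cm C X Y) (VHom (Cm C Y Z) (cobj M Z)))
          (G : VHom (Cm C X Y) (cobj M Y)),
      (forall c, G c = cpi M Y Z (F c)) ->
      cpi M X Z (hcomp (tlift F) (delta C X Y Z)) = cpi M X Y G) /\
  (forall (X : Ob C) (m : cobj M X), cpi M X X (scal_hom (eps C X) m) = m).

Definition is_morph (K : fieldType) (C : coalgebra K) (M N : precontra C)
  (phi : forall X : Ob C, VHom (cobj M X) (cobj N X)) : Prop :=
  forall (X Y : Ob C) (f : VHom (Cm C X Y) (cobj M Y)),
    phi X (cpi M X Y f) = cpi N X Y (hcomp (phi Y) f).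

Definition Hcontra (K : fieldType) (C : coalgebra K) (X : Ob C) (U : lmodType K)
  : precontra C :=
  @Precontra K C (fun Y => VHom (Cm C Y X) U)
    (fun Y Z (F : VHom (Cm C Y Z) (VHom (Cm C Z X) U)) => hcomp (tlift F) (delta C Y Z X)).

Definition Hmap (K : fieldType) (C : coalgebra K) (X : Ob C) (U' U : lmodType K)
  (a : VHom U' U) : forall Y : Ob C, VHom (cobj (Hcontra X U') Y) (cobj (Hcontra X U) Y) :=
  fun Y => @hpost K (Cm C Y X) U' U a.

Arguments is_morph {K C} M N phi.

(* Main.v *)
Require Import Defs.
From HB Require Import structures.
From mathcomp Require Import all_boot all_algebra.
From mathcomp Require Import boolp functions classical_sets ring.
From Stdlib Require Import ClassicalEpsilon.
Set Implicit Arguments.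
Unset Strict Implicit.
Unset Printing Implicit Defensive.
Import GRing.Theory.
Local Open Scope ring_scope.
Local Open Scope classical_set_scope.
Section Sep.
Variables (K : fieldType) (V : lmodType K) (w : V).
Hypothesis w0 : w != 0.

Definition lsubP (G : set (V * K)) :=
  [/\ G (0, 0), (forall k x y, G x -> G y -> G (k *: x.1 + y.1, k * x.2 + y.2)),
      (forall y, G (0, y) -> y = 0) & G (w, 1)].

Lemma sep_total : exists G, lsubP G /\ forall v, exists y, G (v, y).
Proof.
pose P' := fun G : set (V * K) => G = set0 \/ lsubP G.
have [A [PA Amax]] : exists A, P' A /\ forall B, A `<` B -> ~ P' B.
  apply: Zorn_bigcup => F FP Ftot.
  case: (pselect (exists2 X, F X & X !=set0)) => [[X0 FX0 [x0 X0x0]]|nF]; last first.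
    left; apply/seteqP; split => // x [X FX Xx]; apply: nF; exists X => //; by exists x.
  have inP : forall X, F X -> forall x, X x -> lsubP X.
    move=> X FX x Xx; case: (FP X FX) => // HX; by rewrite HX in Xx.
  have two : forall x y, (\bigcup_(X in F) X) x -> (\bigcup_(X in F) X) y ->
     exists X, [/\ F X, lsubP X, X x & X y].
    move=> x y [X FX Xx] [Y FY Yy].
    case: (Ftot X Y FX FY) => [XY|YX].
      by exists Y; split => //; [exact: (inP Y FY y)|exact: XY].
    by exists X; split => //; [exact: (inP X FX x)|exact: YX].
  have [_ [X0z _ _ X0w]] : F X0 /\ lsubP X0 by split => //; exact: (inP X0 FX0 x0).
  right; split.
  - by exists X0.
  - move=> k x y Hx Hy; have [X [FX [_ Xc _ _] Xx Xy]] := two x y Hx Hy.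
    by exists X => //; apply: Xc.
  - move=> y [X FX Xy]; have [_ _ Xf _] := inP X FX _ Xy; exact: Xf.
  - by exists X0.
case: PA => [A0|PA].
  exfalso; apply: (Amax [set p | p.1 = p.2 *: w]).
    rewrite A0; split => //; move=> /(_ (0, 0)); apply => /=; by rewrite scale0r.
  right; split => /=.
  - by rewrite scale0r.
  - by move=> k x y /= -> ->; rewrite scalerDl scalerA.
  - by move=> y /= /esym/eqP; rewrite scaler_eq0 (negbTE w0) orbF => /eqP.
  - by rewrite scale1r.
exists A; split => // v.
apply: contrapT => nv.
have nv' : forall y, ~ A (v, y) by move=> y Ay; apply: nv; exists y.
case: PA => [A00 Ac Af Aw].
apply: (Amax [set p | exists x y l, A (x, y) /\ p = (x + l *: v, y)]).
  split.
    move=> [x y] Axy; exists x, y, 0; split => //; by rewrite scale0r addr0.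
  move=> /(_ (v, 0)) H; apply: (nv' 0); apply: H.
  exists 0, 0, 1; split => //; by rewrite scale1r add0r.
right; split.
- exists 0, 0, 0; split => //; by rewrite scale0r addr0.
- move=> k [p1 p2] [q1 q2] [x [y [l [Axy [-> ->]]]]] [x' [y' [l' [Axy' [-> ->]]]]] /=.
  exists (k *: x + x'), (k * y + y'), (k * l + l'); split.
    exact: (Ac k (x, y) (x', y') Axy Axy').
  congr (_, _); rewrite scalerDr scalerA scalerDl.
  by rewrite addrACA.
- move=> y [x [y' [l [Axy' [e1 e2]]]]].
  case: (eqVneq l 0) => [l0|ln0].
    move: e1; rewrite l0 scale0r addr0 => e1; rewrite e2; apply: Af; by rewrite e1.
  exfalso; apply: (nv' (- l^-1 * y')).
  have -> : v = - l^-1 *: x.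
    apply: (scalerI ln0); rewrite scalerA mulrN mulrV ?unitfE // scaleN1r.
    by apply/eqP; rewrite -addr_eq0 addrC -e1.
  have := Ac (- l^-1) (x, y') (0, 0) Axy' A00; by rewrite /= !addr0.
- exists w, 1, 0; split => //; by rewrite scale0r addr0.
Qed.

Lemma sep_exists : exists chi : Dual V, chi w = 1.
Proof.
have [G [[G0 Gc Gf Gw] Gt]] := sep_total.
have uq : forall v y y', G (v, y) -> G (v, y') -> y = y'.
  move=> v y y' H1 H2; have := Gc (-1) (v, y) (v, y') H1 H2.
  rewrite /= scaleN1r addNr mulN1r => /Gf /eqP; rewrite addrC subr_eq0 => /eqP.
  by move->.
pose f v := projT1 (cid (Gt v)).
have fP : forall v, G (v, f v) by move=> v; exact: (projT2 (cid (Gt v))).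
have lin : linear (f : V -> K^o).
  move=> k u v; change (f (k *: u + v) = k * f u + f v).
  apply: (uq _ _ _ (fP _)); exact: (Gc k (u, f u) (v, f v) (fP u) (fP v)).
exists (mkhom lin); change (f w = 1); exact: (uq _ _ _ (fP w) Gw).
Qed.

End Sep.

Lemma sepV (K : fieldType) (V : lmodType K) (u v : V) :
  (forall chi : Dual V, chi u = chi v) -> u = v.
Proof.
move=> H; apply/eqP; rewrite -subr_eq0; apply/negPn/negP => nz.
have [chi c1] := sep_exists nz.
have e : chi (u - v) = chi u - chi v.
  by rewrite homD -scaleN1r homZ scaleN1r.
by move: c1; rewrite e H subrr => /eqP; rewrite eq_sym oner_eq0.
Qed.
Local Close Scope classical_set_scope.
Lemma hom_sum (K : fieldType) (U V : lmodType K) (f : VHom U V) I (s : seq I) (F : I -> U) :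
  f (\sum_(i <- s) F i) = \sum_(i <- s) f (F i).
Proof.
elim: s => [|x s IH]; first by rewrite !big_nil hom0.
by rewrite !big_cons homD IH.
Qed.

Lemma homN (K : fieldType) (U V : lmodType K) (f : VHom U V) x : f (- x) = - f x.
Proof. by rewrite -scaleN1r homZ scaleN1r. Qed.

Section D2.
Variables (K : fieldType).

Definition bil (A B : lmodType K) (beta : A -> B -> K) :=
  (forall b k x y, beta (k *: x + y) b = k * beta x b + beta y b) /\
  (forall a k x y, beta a (k *: x + y) = k * beta a x + beta a y).

Lemma bil_l (A B : lmodType K) (beta : A -> B -> K) (hb : bil beta) (b : B) :
  linear (fun x => (beta x b : K^o)).
Proof. move=> k x y; exact: hb.1. Qed.
Lemma bil_r (A B : lmodType K) (beta : A -> B -> K) (hb : bil beta) (a : A) :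
  linear (fun y => (beta a y : K^o)).
Proof. move=> k x y; exact: hb.2. Qed.

Lemma D2 (A B : lmodType K) (s : seq (A * B)) :
  (forall (phi : Dual A) (psi : Dual B), \sum_(p <- s) (phi p.1 : K) * (psi p.2 : K) = 0) ->
  forall beta : A -> B -> K, bil beta -> \sum_(p <- s) beta p.1 p.2 = 0.
Proof.
move=> H beta hb.
pose L b := mkhom (bil_l hb b).
pose R a := mkhom (bil_r hb a).
move: {2}(size s) (erefl (size s)) => n; elim: n s H => [|n IH] [|[a0 b0] s] //= H Hn.
  by rewrite big_nil.
move/succn_inj: Hn => Hn.
rewrite big_cons /=.
case: (eqVneq a0 0) => [a00|an0].
  rewrite a00 in H *.
  have -> : beta 0 b0 = 0 by exact: (hom0 (L b0)).
  rewrite add0r; apply: IH Hn => phi psi.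
  by have := H phi psi; rewrite big_cons /= hom0 mul0r add0r.
have [phi0 p01] := sep_exists an0.
have eb0 : b0 = - \sum_(p <- s) (phi0 p.1 : K) *: p.2.
  apply/eqP; rewrite -addr_eq0; apply/eqP; apply: sepV => psi.
  rewrite hom0 homD hom_sum.
  apply: etrans (H phi0 psi); rewrite big_cons p01 /= mul1r.
  congr (_ + _); apply: eq_bigr => p _; rewrite homZ; done.
have hs : forall (C : lmodType K) (f : VHom B C), \sum_(p <- s) (phi0 p.1 : K) *: f p.2 = - f b0.
  move=> C f; rewrite eb0 homN hom_sum opprK; apply: eq_bigr => p _; by rewrite homZ.
have hyp : forall (phi : Dual A) (psi : Dual B),
    \sum_(p <- map (fun p => (p.1 - (phi0 p.1 : K) *: a0, p.2)) s) (phi p.1 : K) * (psi p.2 : K) = 0.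
  move=> phi psi; rewrite big_map /=.
  transitivity (\sum_(p <- s) (phi p.1 : K) * (psi p.2 : K) - (phi a0 : K) * \sum_(p<-s) (phi0 p.1 : K) *: (psi p.2 : K^o)).
    rewrite mulr_sumr -sumrB; apply eq_bigr => p _; rewrite homD homN homZ.
    change ((phi p.1 - phi0 p.1 * phi a0) * psi p.2 = phi p.1 * psi p.2 - phi a0 * (phi0 p.1 * psi p.2)).
    by rewrite mulrBl mulrA [phi a0 * _]mulrC.
  rewrite (hs _ psi) mulrN opprK; have := H phi psi; rewrite big_cons /= => E; by rewrite addrC.
have := IH _ hyp; rewrite size_map => /(_ Hn); rewrite big_map /=.
have -> : \sum_(p <- s) beta (p.1 - (phi0 p.1 : K) *: a0) p.2 =
   \sum_(p <- s) beta p.1 p.2 - \sum_(p <- s) (phi0 p.1 : K) *: (R a0 p.2 : K^o).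
  rewrite -sumrB; apply: eq_bigr => p _.
  change (L p.2 (p.1 - (phi0 p.1 : K) *: a0) = L p.2 p.1 - (phi0 p.1 : K) * L p.2 a0).
  by rewrite homD homN homZ.
by rewrite (hs _ (R a0)) opprK addrC.
Qed.

Lemma bilZl (A B : lmodType K) (beta : A -> B -> K) (hb : bil beta) k x b :
  beta (k *: x) b = k * beta x b.
Proof. exact: (homZ (mkhom (bil_l hb b)) k x). Qed.

Definition tril (A B C : lmodType K) (T : A -> B -> C -> K) :=
  (forall b c k x y, T (k *: x + y) b c = k * T x b c + T y b c) /\ (forall a, bil (T a)).

Lemma bil_prod (B C : lmodType K) (psi : Dual B) (chi : Dual C) :
  bil (fun y z => (psi y : K) * (chi z : K)).
Proof.
split=> [z k x y|y k x x']; rewrite homD homZ.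
  change ((k * psi x + psi y) * chi z = k * (psi x * chi z) + psi y * chi z).
  by rewrite mulrDl mulrA.
change (psi y * (k * chi x + chi x') = k * (psi y * chi x) + psi y * chi x').
by rewrite mulrDr mulrCA.
Qed.

Lemma D3 (A B C : lmodType K) (s : seq (A * (B * C))) :
  (forall (phi : Dual A) (psi : Dual B) (chi : Dual C),
     \sum_(p <- s) (phi p.1 : K) * (psi p.2.1 : K) * (chi p.2.2 : K) = 0) ->
  forall T : A -> B -> C -> K, tril T -> \sum_(p <- s) T p.1 p.2.1 p.2.2 = 0.
Proof.
move=> H T hT.
have L b c : linear (fun x => (T x b c : K^o)) by move=> k x y; exact: hT.1.
pose LL b c := mkhom (L b c).
move: {2}(size s) (erefl (size s)) => n; elim: n s H => [|n IH] [|[a0 [b0 c0]] s] //= H Hn.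
  by rewrite big_nil.
move/succn_inj: Hn => Hn.
rewrite big_cons /=.
case: (eqVneq a0 0) => [a00|an0].
  rewrite a00 in H *.
  have -> : T 0 b0 c0 = 0 by exact: (hom0 (LL b0 c0)).
  rewrite add0r; apply: IH Hn => phi psi chi.
  by have := H phi psi chi; rewrite big_cons /= hom0 !mul0r add0r.
have [phi0 p01] := sep_exists an0.
have key : forall beta : B -> C -> K, bil beta ->
    \sum_(p <- s) (phi0 p.1 : K) * beta p.2.1 p.2.2 = - beta b0 c0.
  move=> beta hb; apply/eqP; rewrite -addr_eq0 addrC; apply/eqP.
  have hyp2 : forall (psi : Dual B) (chi : Dual C),
    \sum_(p <- (b0, c0) :: map (fun p => ((phi0 p.1 : K) *: p.2.1, p.2.2)) s)
       (psi p.1 : K) * (chi p.2 : K) = 0.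
    move=> psi chi; rewrite big_cons big_map /=; apply: etrans (H phi0 psi chi).
    rewrite big_cons p01 /= mul1r; congr (_ + _); apply: eq_bigr => p _; by rewrite homZ.
  apply: etrans (D2 hyp2 hb); rewrite big_cons big_map /=; congr (_ + _).
  by apply: eq_bigr => p _; rewrite bilZl.
have hyp : forall (phi : Dual A) (psi : Dual B) (chi : Dual C),
    \sum_(p <- map (fun p => (p.1 - (phi0 p.1 : K) *: a0, p.2)) s)
       (phi p.1 : K) * (psi p.2.1 : K) * (chi p.2.2 : K) = 0.
  move=> phi psi chi; rewrite big_map /=.
  transitivity (\sum_(p <- s) (phi p.1 : K) * (psi p.2.1 : K) * (chi p.2.2 : K)
     - (phi a0 : K) * \sum_(p <- s) (phi0 p.1 : K) * ((psi p.2.1 : K) * (chi p.2.2 : K))).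
    rewrite mulr_sumr -sumrB; apply eq_bigr => p _; rewrite homD homN homZ.
    change ((phi p.1 - phi0 p.1 * phi a0) * psi p.2.1 * chi p.2.2 =
      phi p.1 * psi p.2.1 * chi p.2.2 - phi a0 * (phi0 p.1 * (psi p.2.1 * chi p.2.2))).
    by ring.
  rewrite (key _ (bil_prod psi chi)) mulrN opprK; have := H phi psi chi; rewrite big_cons /= => E.
  by rewrite mulrA addrC.
have := IH _ hyp; rewrite size_map => /(_ Hn); rewrite big_map /=.
have -> : \sum_(p <- s) T (p.1 - (phi0 p.1 : K) *: a0) p.2.1 p.2.2 =
   \sum_(p <- s) T p.1 p.2.1 p.2.2 - \sum_(p <- s) (phi0 p.1 : K) * T a0 p.2.1 p.2.2.
  rewrite -sumrB; apply: eq_bigr => p _.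
  change (LL p.2.1 p.2.2 (p.1 - (phi0 p.1 : K) *: a0) =
    LL p.2.1 p.2.2 p.1 - (phi0 p.1 : K) * LL p.2.1 p.2.2 a0).
  by rewrite homD homN homZ.
by rewrite (key _ (hT.2 a0)) opprK addrC.
Qed.
End D2.
Section Tens.
Variables (K : fieldType).

Definition rep (A B : lmodType K) (t : Tensor A B) (s : seq (A * B)) :=
  forall (phi : Dual A) (psi : Dual B), (t : _ -> _ -> _) phi psi = \sum_(p <- s) (phi p.1 : K) * (psi p.2 : K).

Lemma rep_exists (A B : lmodType K) (t : Tensor A B) : exists s, rep t s.
Proof.
have [s Hs] := asboolP _ (tensP t); exists s => phi psi; by rewrite Hs.
Qed.

Lemma rep_tens (A B : lmodType K) a b : rep (tens a b : Tensor A B) [:: (a, b)].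
Proof. by move=> phi psi; rewrite big_seq1. Qed.

Lemma rep_lin (A B : lmodType K) (t1 t2 : Tensor A B) s1 s2 k :
  rep t1 s1 -> rep t2 s2 -> rep (k *: t1 + t2) (map (fun p => (k *: p.1, p.2)) s1 ++ s2).
Proof.
move=> h1 h2 phi psi; rewrite big_cat big_map /=.
transitivity (k * (t1 : _ -> _ -> _) phi psi + (t2 : _ -> _ -> _) phi psi); first by [].
rewrite h1 h2 mulr_sumr; congr (_ + _).
by apply: eq_bigr => p _; rewrite homZ; change (k * (phi p.1 * psi p.2) = k * phi p.1 * psi p.2); rewrite mulrA.
Qed.

Lemma rep_sum (A B : lmodType K) (s : seq (A * B)) :
  rep (\sum_(p <- s) tens p.1 p.2) s.
Proof.
elim: s => [|x s IH] phi psi; first by rewrite !big_nil.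
rewrite !big_cons.
transitivity ((tens x.1 x.2 : _ -> _ -> _) phi psi + ((\sum_(p <- s) tens p.1 p.2 : Tensor A B) : _ -> _ -> _) phi psi); first by [].
by rewrite IH.
Qed.

Lemma rep_eq (A B : lmodType K) (t : Tensor A B) s : rep t s -> t = \sum_(p <- s) tens p.1 p.2.
Proof.
move=> h; apply: val_inj; apply/funext => phi; apply/funext => psi.
change (t phi psi = (\sum_(p <- s) tens p.1 p.2 : Tensor A B) phi psi).
by rewrite h rep_sum.
Qed.


Lemma hom_addE (U V : lmodType K) (f g : VHom U V) x : (f + g) x = f x + g x.
Proof. by []. Qed.
Lemma hom_scaleE (U V : lmodType K) (f : VHom U V) k x : (k *: f) x = k *: f x.
Proof. by []. Qed.
Lemma homDZ (U V : lmodType K) (f : VHom U V) k x y : f (k *: x + y) = k *: f x + f y.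
Proof. by rewrite homD homZ. Qed.

Lemma bilF (A B W : lmodType K) (F : VHom A (VHom B W)) (om : Dual W) :
  bil (fun b a => (om (F a b) : K)).
Proof.
split=> [a k x y|b k x y]; first by rewrite !homDZ.
by rewrite homDZ hom_addE hom_scaleE homDZ.
Qed.

Lemma rep_inv (A B W : lmodType K) (F : VHom A (VHom B W)) (t : Tensor B A) s1 s2 :
  rep t s1 -> rep t s2 -> \sum_(p <- s1) F p.2 p.1 = \sum_(p <- s2) F p.2 p.1.
Proof.
move=> h1 h2; apply: sepV => om; rewrite !hom_sum.
apply/eqP; rewrite -subr_eq0; apply/eqP.
have hyp : forall (phi : Dual B) (psi : Dual A),
  \sum_(p <- s1 ++ map (fun p => (- p.1, p.2)) s2) (phi p.1 : K) * (psi p.2 : K) = 0.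
  move=> phi psi; rewrite big_cat big_map /= -h1.
  have -> : \sum_(j <- s2) (phi (- j.1) : K) * (psi j.2 : K) = - (t : _ -> _ -> _) phi psi.
    by rewrite h2 -sumrN; apply: eq_bigr => p _; rewrite homN mulNr.
  by rewrite subrr.
have := D2 hyp (bilF F om); rewrite big_cat big_map /= => E; rewrite -[RHS]E.
congr (_ + _); rewrite -sumrN; apply: eq_bigr => p _; by rewrite !homN.
Qed.


Lemma tlift_spec (A B W : lmodType K) (F : VHom A (VHom B W)) a b :
  tlift F (tens b a) = F a b.
Proof.
rewrite /tlift; set P := (fun h : VHom (Tensor B A) W => _).
suff : exists h, P h by move=> /(epsilon_spec (inhabits 0) P); apply.
pose sx (t : Tensor B A) := projT1 (cid (rep_exists t)).
have sxP t : rep t (sx t) by exact: (projT2 (cid (rep_exists t))).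
pose h t := \sum_(p <- sx t) F p.2 p.1.
have hl : linear h.
  move=> k t1 t2; rewrite /h (rep_inv F (sxP _) (rep_lin k (sxP t1) (sxP t2))).
  rewrite big_cat big_map /= scaler_sumr; congr (_ + _).
  by apply: eq_bigr => p _; rewrite homZ.
exists (mkhom hl) => a' b'; change (h (tens b' a') = F a' b').
by rewrite /h (rep_inv F (sxP _) (rep_tens b' a')) big_seq1.
Qed.

Lemma tlift_rep (A B W : lmodType K) (F : VHom A (VHom B W)) (t : Tensor B A) s :
  rep t s -> tlift F t = \sum_(p <- s) F p.2 p.1.
Proof.
move=> h; rewrite (rep_eq h) hom_sum; apply: eq_bigr => p _; exact: tlift_spec.
Qed.


Lemma trilF (A B C W : lmodType K) (F : VHom C (VHom B (VHom A W))) (om : Dual W) :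
  tril (fun x y z => (om (F z y x) : K)).
Proof.
split=> [b c k x y|a]; first by rewrite !homDZ.
split=> [z k x y|y k x x'].
  by rewrite homDZ hom_addE hom_scaleE homDZ.
  by rewrite homDZ (hom_addE (k *: F x) (F x') y) hom_scaleE hom_addE hom_scaleE homDZ.
Qed.

Lemma tri_inv (A B C W : lmodType K) (F : VHom C (VHom B (VHom A W))) (L1 L2 : seq (A * (B * C))) :
  (forall (phi : Dual A) (psi : Dual B) (chi : Dual C),
     \sum_(p <- L1) (phi p.1 : K) * (psi p.2.1 : K) * (chi p.2.2 : K) =
     \sum_(p <- L2) (phi p.1 : K) * (psi p.2.1 : K) * (chi p.2.2 : K)) ->
  \sum_(p <- L1) F p.2.2 p.2.1 p.1 = \sum_(p <- L2) F p.2.2 p.2.1 p.1.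
Proof.
move=> h; apply: sepV => om; rewrite !hom_sum.
apply/eqP; rewrite -subr_eq0; apply/eqP.
have hyp : forall (phi : Dual A) (psi : Dual B) (chi : Dual C),
  \sum_(p <- L1 ++ map (fun p => (- p.1, p.2)) L2) (phi p.1 : K) * (psi p.2.1 : K) * (chi p.2.2 : K) = 0.
  move=> phi psi chi; rewrite big_cat big_map /= h.
  have -> : \sum_(j <- L2) (phi (- j.1) : K) * (psi j.2.1 : K) * (chi j.2.2 : K) =
     - \sum_(j <- L2) (phi j.1 : K) * (psi j.2.1 : K) * (chi j.2.2 : K).
    by rewrite -sumrN; apply: eq_bigr => p _; rewrite homN !mulNr.
  by rewrite subrr.
have := D3 hyp (trilF F om); rewrite big_cat big_map /= => E; rewrite -[RHS]E.
congr (_ + _); rewrite -sumrN; apply: eq_bigr => p _; by rewrite !homN.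
Qed.

Definition rp (A B : lmodType K) (t : Tensor A B) := projT1 (cid (rep_exists t)).
Lemma rpP (A B : lmodType K) (t : Tensor A B) : rep t (rp t).
Proof. exact: (projT2 (cid (rep_exists t))). Qed.

Lemma hom_ext (U V : lmodType K) (f g : VHom U V) : (forall x, f x = g x) -> f = g.
Proof. by move=> h; apply: val_inj; apply/funext => x; exact: h. Qed.

Lemma hom_sumE (U V : lmodType K) I (s : seq I) (F : I -> VHom U V) x :
  (\sum_(i <- s) F i) x = \sum_(i <- s) F i x.
Proof.
elim: s => [|y s IH]; first by rewrite !big_nil.
by rewrite !big_cons hom_addE IH.
Qed.

End Tens.
Section Main.
Variables (K : fieldType) (C : coalgebra K) (HC : is_coalgebra C) (X : Ob C).

Lemma H_lin (U : lmodType K) (Y Z : Ob C) : linear (cpi (Hcontra X U) Y Z).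
Proof.
move=> k F G; apply: hom_ext => c /=.
change (tlift (k *: F + G) (delta C Y Z X c) =
  k *: tlift F (delta C Y Z X c) + tlift G (delta C Y Z X c)).
rewrite !(tlift_rep _ (rpP _)) scaler_sumr -big_split /=.
by apply: eq_bigr => p _.
Qed.

Lemma H_unit (U : lmodType K) (Y : Ob C) (m : cobj (Hcontra X U) Y) :
  cpi (Hcontra X U) Y Y (scal_hom (eps C Y) m) = m.
Proof.
apply: hom_ext => c /=.
change (tlift (scal_hom (eps C Y) m) (delta C Y Y X c) = m c).
rewrite (tlift_rep _ (rpP _)); apply: sepV => om; rewrite hom_sum.
have [_ [_ cu]] := HC.
rewrite -[RHS]/(hcomp om m c) -(cu Y X c (hcomp om m)) rpP.
apply: eq_bigr => p _; rewrite homZ.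
by rewrite mulrC.
Qed.

Lemma H_assoc (U : lmodType K) (P Q R : Ob C)
   (F : VHom (Cm C P Q) (VHom (Cm C Q R) (cobj (Hcontra X U) R)))
   (G : VHom (Cm C P Q) (cobj (Hcontra X U) Q)) :
  (forall c, G c = cpi (Hcontra X U) Q R (F c)) ->
  cpi (Hcontra X U) P R (hcomp (tlift F) (delta C P Q R)) = cpi (Hcontra X U) P Q G.
Proof.
move=> hG; apply: hom_ext => c /=.
change (tlift (hcomp (tlift F) (delta C P Q R)) (delta C P R X c) =
        tlift G (delta C P Q X c)).
rewrite !(tlift_rep _ (rpP _)).
under eq_bigr => p _ do rewrite /= (tlift_rep _ (rpP _)) hom_sumE.
under [RHS]eq_bigr => p _ do rewrite hG /= (tlift_rep _ (rpP _)).
pose L1 := flatten (map (fun p => map (fun q => (p.1, (q.1, q.2))) (rp (delta C P Q R p.2)))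
   (rp (delta C P R X c))).
pose L2 := flatten (map (fun p => map (fun q => (q.1, (q.2, p.2))) (rp (delta C Q R X p.1)))
   (rp (delta C P Q X c))).
transitivity (\sum_(x <- L1) F x.2.2 x.2.1 x.1).
  by rewrite big_flatten big_map; apply: eq_bigr => p _; rewrite big_map.
transitivity (\sum_(x <- L2) F x.2.2 x.2.1 x.1); last first.
  by rewrite big_flatten big_map; apply: eq_bigr => p _; rewrite big_map.
apply: tri_inv => phi psi chi.
have E := (HC.1 P Q R X c phi psi chi).
rewrite (rpP (delta C P Q X c)) (rpP (delta C P R X c)) in E.
rewrite !big_flatten !big_map.
transitivity (\sum_(p <- rp (delta C P R X c)) (phi p.1 : K) * (tev (delta C P Q R) psi chi p.2 : K)).
  apply: eq_bigr => p _; rewrite big_map.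
  change (tev (delta C P Q R) psi chi p.2) with ((delta C P Q R p.2 : _ -> _ -> _) psi chi).
  rewrite rpP mulr_sumr; apply: eq_bigr => q _ /=; by rewrite mulrA.
rewrite -E; apply: eq_bigr => p _; rewrite big_map.
change (tev (delta C Q R X) phi psi p.1) with ((delta C Q R X p.1 : _ -> _ -> _) phi psi).
by rewrite rpP mulr_suml.
Qed.

Lemma H_contra (U : lmodType K) : is_contramodule (Hcontra X U).
Proof. split; first exact: H_lin. split; [exact: H_assoc | exact: H_unit]. Qed.

Lemma H_morph (U' U : lmodType K) (a : VHom U' U) :
  is_morph (Hcontra X U') (Hcontra X U) (Hmap X a).
Proof.
move=> Y Z f; apply: hom_ext => c.
change (a (tlift f (delta C Y Z X c)) = tlift (hcomp (Hmap X a Z) f) (delta C Y Z X c)).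
by rewrite !(tlift_rep _ (rpP _)) hom_sum.
Qed.

Lemma eta_lin (U : lmodType K) : linear (fun u : U => scal_hom (eps C X) u).
Proof.
move=> k u v; apply: hom_ext => c.
change ((eps C X c : K) *: (k *: u + v) = k *: ((eps C X c : K) *: u) + (eps C X c : K) *: v).
by rewrite scalerDr !scalerA mulrC.
Qed.
Definition eta (U : lmodType K) : VHom U (VHom (Cm C X X) U) := mkhom (@eta_lin U).

Definition Phi (U : lmodType K) (M : precontra C)
  (phi : forall Y : Ob C, VHom (cobj (Hcontra X U) Y) (cobj M Y)) : VHom U (cobj M X) :=
  hcomp (phi X) (eta U).

Lemma H_gen (U : lmodType K) (Y : Ob C) (g : VHom (Cm C Y X) U) :
  g = cpi (Hcontra X U) Y X (hcomp (eta U) g).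
Proof.
apply: hom_ext => c.
change (g c = tlift (hcomp (eta U) g) (delta C Y X X c)).
rewrite (tlift_rep _ (rpP _)); apply: sepV => om; rewrite hom_sum.
have [_ [cu _]] := HC.
rewrite -[LHS]/(hcomp om g c) -(cu Y X c (hcomp om g)) rpP.
apply: eq_bigr => p _; transitivity (om ((eps C X p.1 : K) *: g p.2)); last by []. by rewrite homZ.
Qed.

End Main.

Lemma phi_lin (K : fieldType) (C : coalgebra K) (X : Ob C) (U : lmodType K) (M : precontra C)
  (hM : is_contramodule M) (f : VHom U (cobj M X)) (Y : Ob C) :
  linear (fun g : VHom (Cm C Y X) U => cpi M Y X (hcomp f g)).
Proof.
move=> k g1 g2 /=.
have -> : hcomp f (k *: g1 + g2) = k *: hcomp f g1 + hcomp f g2.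
  apply: hom_ext => c; change (f (k *: g1 c + g2 c) = k *: f (g1 c) + f (g2 c)).
  exact: homDZ.
exact: hM.1.
Qed.

Theorem proposition3p3 (K : fieldType) (C : coalgebra K) (HC : is_coalgebra C)
    (X : Ob C) :
  (* H_X is a functor Vect_K -> ^C Ctr *)
  (forall U : lmodType K, is_contramodule (Hcontra X U)) /\
  (forall (U' U : lmodType K) (a : VHom U' U),
      is_morph (Hcontra X U') (Hcontra X U) (Hmap X a)) /\
  (* natural bijections  ^C Ctr(H_X^U, M) ~= Vect_K(U, M(X)) *)
  exists Phi : forall (U : lmodType K) (M : precontra C),
      (forall Y : Ob C, VHom (cobj (Hcontra X U) Y) (cobj M Y)) -> VHom U (cobj M X),
    (forall (U : lmodType K) (M : precontra C), is_contramodule M ->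
       (forall phi phi', is_morph (Hcontra X U) M phi -> is_morph (Hcontra X U) M phi' ->
          Phi U M phi = Phi U M phi' -> phi = phi') /\
       (forall f : VHom U (cobj M X),
          exists phi, is_morph (Hcontra X U) M phi /\ Phi U M phi = f)) /\
    (forall (U' U : lmodType K) (a : VHom U' U) (M N : precontra C)
        (phi : forall Y : Ob C, VHom (cobj (Hcontra X U) Y) (cobj M Y))
        (psi : forall Y : Ob C, VHom (cobj M Y) (cobj N Y)),
       is_contramodule M -> is_contramodule N ->
       is_morph (Hcontra X U) M phi -> is_morph M N psi ->
       Phi U' N (fun Y => hcomp (psi Y) (hcomp (phi Y) (Hmap X a Y)))
         = hcomp (psi X) (hcomp (Phi U M phi) a)).
Proof.
split; first by move=> U; exact: H_contra.
split; first by move=> U' U a; exact: H_morph.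
exists (@Phi K C X); split.
  move=> U M hM; split.
    move=> phi phi' hp hp' EPhi.
    apply: functional_extensionality_dep => Y; apply: hom_ext => g.
    rewrite (H_gen HC g) hp hp'.
    have e : forall ph : forall Y : Ob C, VHom (cobj (Hcontra X U) Y) (cobj M Y),
        hcomp (ph X) (hcomp (eta X U) g) = hcomp (Phi ph) g by move=> ph; apply: hom_ext.
    by rewrite !e EPhi.
  move=> f; exists (fun Y => mkhom (@phi_lin K C X U M hM f Y)); split.
    move=> Y Z F.
    change (cpi M Y X (hcomp f (cpi (Hcontra X U) Y Z F)) =
            cpi M Y Z (hcomp (mkhom (@phi_lin K C X U M hM f Z)) F)).
    rewrite -(hM.2.1 Y Z X (hcomp (hpost (Cm C Z X) f) F) (hcomp (mkhom (@phi_lin K C X U M hM f Z)) F) (fun c => erefl)).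
    congr (cpi M Y X _); apply: hom_ext => c.
    change (f (tlift F (delta C Y Z X c)) = tlift (hcomp (hpost (Cm C Z X) f) F) (delta C Y Z X c)).
    by rewrite !(tlift_rep _ (rpP _)) hom_sum.
  apply: hom_ext => u.
  change (cpi M X X (hcomp f (scal_hom (eps C X) u)) = f u).
  have -> : hcomp f (scal_hom (eps C X) u) = scal_hom (eps C X) (f u).
    by apply: hom_ext => c; exact: homZ.
  exact: hM.2.2.
move=> U' U a M N phi psi _ _ _ _; apply: hom_ext => u.
change (psi X (phi X (Hmap X a X (eta X U' u))) = psi X (phi X (eta X U (a u)))).
have -> : Hmap X a X (eta X U' u) = eta X U (a u) by apply: hom_ext => c; exact: homZ.
by [].
Qed.
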